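(* For every $z\in\mathbb R$ there is a constant $C_z$ depending only on $z$ such that for all integers $q\ge1$ $$\left|\sum_{u=0}^{q}\sum_{k=0}^{u}\frac{\alpha_{k,u-k}}{k!(u-k)!}\frac{\beta_{q-u}(z)}{(q-u)!}\right|\le C_z\,2^{q}\frac{1}{\sqrt{(q-1)!}}.$$
   Context: $H_n$ are the probabilists' Hermite polynomials, $\phi$ the standard Gaussian density, $\beta_\ell(z):=\phi(z)H_\ell(z)$. For nonnegative integers $n,m$, $\alpha_{2n,2m}=\sqrt{\frac\pi2}\frac{(2n)!(2m)!}{n!m!}\frac{1}{2^{n+m}}\sum_{i=0}^{n+m}(-1)^{i+n+m}\binom{n+m}{i}\frac{(2i+1)!}{(i!)^2}\frac1{4^i}$, and $\alpha_{k,l}=0$ unless $k$ and $l$ are both even. *)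

(* Defs.v *)
From Stdlib Require Import Reals Lra Lia Factorial.
Open Scope R_scope.

(* Probabilists' Hermite polynomials:
   He_0 = 1, He_1 = x, He_{n+2} = x He_{n+1} - (n+1) He_n. *)
Fixpoint hermite_pair (n : nat) (x : R) : R * R :=
  match n with
  | O => (1, x)
  | S m => let (a, b) := hermite_pair m x in (b, x * b - INR (S m) * a)
  end.

Definition hermiteH (n : nat) (x : R) : R := fst (hermite_pair n x).

Definition phi (z : R) : R := exp (- z ^ 2 / 2) / sqrt (2 * PI).

Definition beta (l : nat) (z : R) : R := phi z * hermiteH l z.

(* alpha_{2n,2m} *)
Definition alpha_even (n m : nat) : R :=
  sqrt (PI / 2) * (INR (fact (2 * n)) * INR (fact (2 * m))
                   / (INR (fact n) * INR (fact m))) / 2 ^ (n + m)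
  * sum_f_R0 (fun i => (-1) ^ (i + n + m) * C (n + m) i
                        * INR (fact (2 * i + 1)) / (INR (fact i)) ^ 2 / 4 ^ i)
             (n + m).

Definition alpha (k l : nat) : R :=
  if andb (Nat.even k) (Nat.even l) then alpha_even (Nat.div2 k) (Nat.div2 l) else 0.

(* Main.v *)
Require Import Defs.
From Stdlib Require Import Reals Factorial Lra Lia.
Open Scope R_scope.

Lemma m1S n : (-1)^(S n) = - ((-1)^n).
Proof. simpl; ring. Qed.

Lemma m1nn n : (-1)^(n+n) = 1.
Proof. induction n; simpl; auto. rewrite Nat.add_succ_r, m1S, IHn. ring. Qed.

Lemma Cn0 n : C n 0 = 1.
Proof. unfold C. rewrite Nat.sub_0_r. simpl. field. apply INR_fact_neq_0. Qed.

Lemma Cnn n : C n n = 1.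
Proof. unfold C. rewrite Nat.sub_diag. simpl. field. apply INR_fact_neq_0. Qed.

Definition T (N : nat) (g : nat -> R) : R :=
  sum_f_R0 (fun i => (-1)^(i+N) * C N i * g i) N.

Lemma T_S N g : T (S N) g = T N (fun i => g (S i)) - T N g.
Proof.
  destruct N as [|M].
  - unfold T. simpl. rewrite !Cn0. unfold C. simpl. field.
  - unfold T.
    rewrite (decomp_sum _ (S (S M))) by lia. simpl Nat.pred.
    rewrite tech5.
    rewrite (sum_eq _ (fun i => (-1)^(i + S M) * C (S M) i * g (S i)
                             - (-1)^(S i + S M) * C (S M) (S i) * g (S i))).
    2:{ intros i Hi. rewrite <- pascal by lia.
        replace (S i + S (S M))%nat with (S (S (i + S M))) by lia.
        replace (S i + S M)%nat with (S (i + S M)) by lia.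
        rewrite !m1S. ring. }
    rewrite minus_sum.
    rewrite tech5.
    rewrite (decomp_sum (fun i => (-1)^(i + S M) * C (S M) i * g i) (S M)) by lia.
    simpl Nat.pred.
    replace (S (S M) + S (S M))%nat with (S (S M) + S (S M))%nat by lia.
    rewrite m1nn. replace (S M + S M)%nat with (S M + S M)%nat by lia. rewrite m1nn.
    rewrite !Cn0, !Cnn. simpl (0 + _)%nat.
    rewrite (m1S (S M)). ring.
Qed.

Fixpoint pp (j : nat) : R := match j with O => 1 | S j' => pp j' * (INR j' + 3/2) end.
Fixpoint cc (N : nat) : R := match N with O => 1 | S N' => cc N' * (1/2 - INR N') end.
Definition PP (N j : nat) : R := pp j * cc N / INR (fact (j + N)).

Lemma T_ext N g h : (forall i, g i = h i) -> T N g = T N h.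
Proof. intros H. unfold T. apply sum_eq. intros. now rewrite H. Qed.

Lemma PP_rec N j : PP N (S j) - PP N j = PP (S N) j.
Proof.
  unfold PP. simpl pp. simpl cc.
  replace (S j + N)%nat with (S (j + N)) by lia.
  replace (j + S N)%nat with (S (j + N)) by lia.
  rewrite fact_simpl, mult_INR, S_INR, plus_INR.
  assert (H := INR_fact_neq_0 (j + N)). assert (0 <= INR j) by apply pos_INR.
  assert (0 <= INR N) by apply pos_INR.
  field. split; auto. lra.
Qed.

Lemma T_PP N : forall j, T N (fun i => PP 0 (j + i)) = PP N j.
Proof.
  induction N; intros j.
  - unfold T. simpl. rewrite Cn0, Nat.add_0_r. ring.
  - rewrite T_S. rewrite (T_ext N _ (fun i => PP 0 (S j + i))).
    2:{ intros i. f_equal. lia. }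
    rewrite !IHN. apply PP_rec.
Qed.

Lemma cc_bound N : Rabs (cc N) <= INR (fact N).
Proof.
  induction N; simpl cc.
  - simpl. rewrite Rabs_R1. lra.
  - rewrite Rabs_mult, fact_simpl, mult_INR, S_INR.
    assert (0 <= INR N) by apply pos_INR.
    assert (Rabs (1/2 - INR N) <= INR N + 1) by (apply Rabs_le; lra).
    rewrite Rmult_comm. apply Rmult_le_compat; try apply Rabs_pos; auto.
Qed.

Lemma f_pp i : INR (fact (2 * i + 1)) / INR (fact i) ^ 2 / 4 ^ i = pp i / INR (fact i).
Proof.
  induction i.
  - simpl. field.
  - replace (2 * S i + 1)%nat with (S (S (2 * i + 1))) by lia.
    rewrite !fact_simpl, !mult_INR. simpl pp.
    assert (H := INR_fact_neq_0 i). assert (H1 := INR_fact_neq_0 (2*i+1)).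
    assert (0 <= INR i) by apply pos_INR.
    assert (E : pp i = INR (fact (2 * i + 1)) / INR (fact i) ^ 2 / 4 ^ i * INR (fact i))
      by (rewrite IHi; field; auto).
    rewrite E. rewrite !S_INR, plus_INR, mult_INR. simpl (INR 2).
    simpl (INR 1). idtac.
    change (4 ^ S i) with (4 * 4 ^ i). field. repeat split; auto; try lra. apply pow_nonzero; lra.
Qed.

Lemma alpha_sum_bound n m :
  Rabs (sum_f_R0 (fun i => (-1) ^ (i + n + m) * C (n + m) i
                        * INR (fact (2 * i + 1)) / (INR (fact i)) ^ 2 / 4 ^ i) (n + m)) <= 1.
Proof.
  rewrite (sum_eq _ (fun i => (-1)^(i + (n+m)) * C (n+m) i * PP 0 (0 + i))).
  2:{ intros i _. rewrite Nat.add_assoc. unfold PP. simpl (0+i)%nat. rewrite Nat.add_0_r.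
      simpl cc. rewrite Rmult_1_r, <- f_pp. field. split; [apply INR_fact_neq_0|apply pow_nonzero; lra].
      }
  fold (T (n+m) (fun i => PP 0 (0 + i))). rewrite T_PP. unfold PP. simpl pp.
  simpl (0 + _)%nat. unfold Rdiv. rewrite Rabs_mult, Rabs_mult, Rabs_R1.
  rewrite Rabs_inv, (Rabs_pos_eq (INR _)) by apply pos_INR.
  assert (H := cc_bound (n+m)). assert (H1 := INR_fact_lt_0 (n+m)).
  rewrite Rmult_1_l. apply (Rmult_le_reg_r (INR (fact (n+m)))); auto.
  rewrite Rmult_assoc, Rinv_l by lra. lra.
Qed.

Lemma fact2n n : INR (fact (2 * n)) <= 4 ^ n * INR (fact n) ^ 2.
Proof.
  induction n.
  - simpl. lra.
  - replace (2 * S n)%nat with (S (S (2 * n))) by lia.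
    rewrite !fact_simpl, !mult_INR, !S_INR, mult_INR. simpl (INR 2).
    assert (0 <= INR n) by apply pos_INR.
    assert (0 <= INR (fact (2*n))) by apply pos_INR.
    change (4 ^ S n) with (4 * 4 ^ n).
    assert (E : (4 * 4 ^ n * ((INR n + 1) * INR (fact n)) ^ 2) =
                (4 * (INR n + 1) ^ 2) * (4 ^ n * INR (fact n) ^ 2)) by ring.
    rewrite E. rewrite <- Rmult_assoc. apply Rmult_le_compat; auto.
    + apply Rmult_le_pos; nra.
    + nra.
Qed.

Lemma even_double k : Nat.even k = true -> k = (2 * Nat.div2 k)%nat.
Proof.
  intros H. rewrite (Nat.div2_odd k) at 1. rewrite <- Nat.negb_even, H. simpl. lia.
Qed.

Lemma alpha_term_bound k l :
  (alpha k l / (INR (fact k) * INR (fact l)))² <= (PI / 2) / (INR (fact k) * INR (fact l)).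
Proof.
  assert (Hk := INR_fact_lt_0 k). assert (Hl := INR_fact_lt_0 l).
  assert (HP := PI_RGT_0).
  unfold alpha.
  destruct (Nat.even k) eqn:Ek; destruct (Nat.even l) eqn:El; simpl andb;
    try (unfold Rdiv at 1; rewrite Rmult_0_l, Rsqr_0;
         apply Rlt_le, Rdiv_lt_0_compat; [lra | apply Rmult_lt_0_compat; lra]).
  apply even_double in Ek, El.
  set (n := Nat.div2 k) in *. set (m := Nat.div2 l) in *.
  set (s := sum_f_R0 (fun i => (-1) ^ (i + n + m) * C (n + m) i
                        * INR (fact (2 * i + 1)) / (INR (fact i)) ^ 2 / 4 ^ i) (n + m)).
  assert (Hs : Rabs s <= 1) by apply alpha_sum_bound.
  assert (Ha := INR_fact_lt_0 n). assert (Hb := INR_fact_lt_0 m).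
  assert (H2 : 0 < 2 ^ (n + m)) by (apply pow_lt; lra).
  assert (EX : alpha_even n m / (INR (fact k) * INR (fact l)) =
               sqrt (PI/2) * s / (INR (fact n) * INR (fact m) * 2 ^ (n+m))).
  { unfold alpha_even. fold s. rewrite <- Ek, <- El. field. lra. }
  change (if true then alpha_even n m else 0) with (alpha_even n m). rewrite EX. rewrite Rsqr_div' , Rsqr_mult, Rsqr_sqrt by lra.
  assert (Hs2 : s² <= 1).
  { rewrite Rsqr_abs. assert (0 <= Rabs s) by apply Rabs_pos. unfold Rsqr. nra. }
  assert (HD : INR (fact k) * INR (fact l) <= (INR (fact n) * INR (fact m) * 2 ^ (n + m))²).
  { rewrite Ek, El. fold n m.
    assert (A1 := fact2n n). assert (A2 := fact2n m).
    assert (E2 : (INR (fact n) * INR (fact m) * 2 ^ (n + m))² =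
                 (4 ^ n * INR (fact n) ^ 2) * (4 ^ m * INR (fact m) ^ 2)).
    { unfold Rsqr. rewrite pow_add. replace 4 with (2*2) by ring. rewrite !Rpow_mult_distr. ring. }
    rewrite E2. apply Rmult_le_compat; auto; apply pos_INR. }
  assert (HD0 : 0 < INR (fact k) * INR (fact l)) by (apply Rmult_lt_0_compat; lra).
  apply Rle_trans with ((PI/2) / (INR (fact n) * INR (fact m) * 2 ^ (n + m))²).
  - unfold Rdiv. rewrite (Rmult_assoc (PI * /2)). apply Rmult_le_compat_l. lra.
    rewrite <- (Rmult_1_l (/ _)) at 2. apply Rmult_le_compat_r; auto.
    apply Rlt_le, Rinv_0_lt_compat. lra.
  - unfold Rdiv. apply Rmult_le_compat_l. lra. apply Rinv_le_contravar; auto.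
Qed.

Lemma single_le (f : nat -> R) N k : (forall i, 0 <= f i) -> (k <= N)%nat -> f k <= sum_f_R0 f N.
Proof.
  intros Hf Hk. induction N.
  - assert (k = 0)%nat by lia. subst. simpl. lra.
  - destruct (Nat.eq_dec k (S N)).
    + subst. rewrite tech5. assert (0 <= sum_f_R0 f N).
      { apply cond_pos_sum. auto. } lra.
    + rewrite tech5. specialize (Hf (S N)). assert (f k <= sum_f_R0 f N) by (apply IHN; lia). lra.
Qed.

Lemma ev_bounded (f : nat -> R) n0 :
  (forall n, (n0 <= n)%nat -> f (S n) <= f n) -> exists M, forall n, f n <= M.
Proof.
  intros H. exists (sum_f_R0 (fun i => Rabs (f i)) n0). intros n.
  assert (Hs : forall k, (k <= n0)%nat -> f k <= sum_f_R0 (fun i => Rabs (f i)) n0).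
  { intros k Hk. apply Rle_trans with (Rabs (f k)). apply Rle_abs.
    apply (single_le (fun i => Rabs (f i))); auto. intros; apply Rabs_pos. }
  destruct (Nat.le_gt_cases n n0). auto.
  assert (Hd : forall d, f (n0 + d)%nat <= f n0).
  { induction d. rewrite Nat.add_0_r; lra.
    replace (n0 + S d)%nat with (S (n0 + d)) by lia.
    specialize (H (n0 + d)%nat). assert (n0 <= n0 + d)%nat by lia. specialize (H H1). lra. }
  replace n with (n0 + (n - n0))%nat by lia. eapply Rle_trans. apply Hd. apply Hs. lia.
Qed.

Lemma herm_snd n x : snd (hermite_pair n x) = hermiteH (S n) x.
Proof. unfold hermiteH. simpl. destruct (hermite_pair n x). reflexivity. Qed.

Lemma herm_rec n x : hermiteH (S (S n)) x = x * hermiteH (S n) x - INR (S n) * hermiteH n x.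
Proof.
  unfold hermiteH at 1. simpl hermite_pair. 
  rewrite <- (herm_snd n x). unfold hermiteH.
  destruct (hermite_pair n x). simpl. reflexivity.
Qed.

Lemma divle c x M : 0 < c -> x / c <= M -> x <= M * c.
Proof. intros Hc H. apply Rmult_le_compat_r with (r := c) in H; [|lra].
  unfold Rdiv in H. rewrite Rmult_assoc, Rinv_l in H by lra. lra. Qed.

Lemma lediv c x M : 0 < c -> x <= M * c -> x / c <= M.
Proof. intros Hc H. apply Rmult_le_reg_r with c; auto. unfold Rdiv.
  rewrite Rmult_assoc, Rinv_l by lra. lra. Qed.

Definition GG z n := hermiteH n z ^ 2 / ((3/2) ^ n * INR (fact n)).

Lemma GG_step z n : 12 * z ^ 2 <= INR n ->
  GG z (S (S n)) <= Rmax (GG z n) (GG z (S n)).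
Proof.
  intros Hn. set (M := Rmax (GG z n) (GG z (S n))).
  assert (Ha : 0 < (3/2) ^ n * INR (fact n)).
  { apply Rmult_lt_0_compat. apply pow_lt; lra. apply INR_fact_lt_0. }
  set (a := (3/2) ^ n * INR (fact n)) in *.
  assert (HG0 : hermiteH n z ^ 2 <= M * a).
  { assert (GG z n <= M) by apply Rmax_l. unfold GG in H. fold a in H.
    apply divle; auto. }
  assert (Hc : 0 <= INR n) by apply pos_INR.
  assert (Ea1 : (3/2) ^ S n * INR (fact (S n)) = a * (3/2) * (INR n + 1)).
  { unfold a. rewrite fact_simpl, mult_INR, S_INR. simpl. ring. }
  assert (Ea2 : (3/2) ^ S (S n) * INR (fact (S (S n))) = a * (3/2)^2 * (INR n + 1) * (INR n + 2)).
  { unfold a. rewrite !fact_simpl, !mult_INR, !S_INR. simpl. ring. }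
  assert (HG1 : hermiteH (S n) z ^ 2 <= M * (a * (3/2) * (INR n + 1))).
  { assert (GG z (S n) <= M) by apply Rmax_r. unfold GG in H. rewrite Ea1 in H.
    assert (0 < a * (3/2) * (INR n + 1)) by (apply Rmult_lt_0_compat; lra).
    apply divle; auto. }
  assert (HM : 0 <= M).
  { apply Rle_trans with (GG z n). unfold GG. apply Rle_mult_inv_pos. apply pow2_ge_0. auto.
    apply Rmax_l. }
  unfold GG at 1. rewrite Ea2, herm_rec, S_INR.
  assert (0 < a * (3 / 2) ^ 2 * (INR n + 1) * (INR n + 2)) by (apply Rmult_lt_0_compat; try lra; apply Rmult_lt_0_compat; try lra; apply Rmult_lt_0_compat; lra).
  apply lediv; auto.
  set (h1 := hermiteH (S n) z) in *. set (h0 := hermiteH n z) in *.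
  assert (Hsq : (z * h1 - (INR n + 1) * h0) ^ 2 <= 2 * z^2 * h1^2 + 2 * (INR n + 1)^2 * h0^2).
  { assert (0 <= (z * h1 + (INR n + 1) * h0)^2) by apply pow2_ge_0. nra. }
  eapply Rle_trans. apply Hsq.
  assert (Hz : 0 <= z ^ 2) by apply pow2_ge_0.
  assert (T1 : 2 * z^2 * h1^2 <= 2 * z^2 * (M * (a * (3/2) * (INR n + 1)))).
  { apply Rmult_le_compat_l; nra. }
  assert (T2 : 2 * (INR n + 1)^2 * h0^2 <= 2 * (INR n + 1)^2 * (M * a)).
  { apply Rmult_le_compat_l; nra. }
  assert (Ma : 0 <= M * a * (INR n + 1)) by (apply Rmult_le_pos; try lra; apply Rmult_le_pos; lra).
  assert (Key : M * a * (INR n + 1) * (3 * z^2 + 2 * (INR n + 1)) <= M * a * (INR n + 1) * ((3/2)^2 * (INR n + 2))).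
  { apply Rmult_le_compat_l; auto. lra. }
  nra.
Qed.

Lemma herm_bound z : exists K, forall n, hermiteH n z ^ 2 <= K * (3/2) ^ n * INR (fact n).
Proof.
  destruct (INR_unbounded (12 * z ^ 2)) as [n0 Hn0].
  destruct (ev_bounded (fun n => Rmax (GG z n) (GG z (S n))) n0) as [M HM].
  { intros n Hn. apply Rmax_lub. apply Rmax_r. apply GG_step.
    apply le_INR in Hn. lra. }
  exists M. intros n.
  assert (GG z n <= M) by (eapply Rle_trans; [apply Rmax_l | apply HM]).
  unfold GG in H.
  assert (Ha : 0 < (3/2) ^ n * INR (fact n)).
  { apply Rmult_lt_0_compat. apply pow_lt; lra. apply INR_fact_lt_0. }
  rewrite Rmult_assoc. apply divle; auto.
Qed.

Lemma C_pos n i : 0 <= C n i.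
Proof. unfold C. apply Rle_mult_inv_pos. apply pos_INR.
  apply Rmult_lt_0_compat; apply INR_fact_lt_0. Qed.

Lemma Cle2 u k : (k <= u)%nat -> C u k <= 2 ^ u.
Proof.
  intros H.
  replace 2 with (1 + 1) by ring. rewrite binomial.
  eapply Rle_trans; [| apply (single_le (fun i => C u i * 1 ^ i * 1 ^ (u - i)) u k); auto].
  + cbv beta. rewrite !pow1, !Rmult_1_r. lra.
  + intros i. cbv beta. rewrite !pow1, !Rmult_1_r. apply C_pos.
Qed.

Lemma Cq q u : (u <= q)%nat -> C q u * 2 ^ u * (3/2) ^ (q - u) <= (7/2) ^ q.
Proof.
  intros H. replace (7/2) with (2 + 3/2) by field. rewrite binomial.
  apply (single_le (fun i => C q i * 2 ^ i * (3/2) ^ (q - i)) q u); auto.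
  intros i. apply Rmult_le_pos. apply Rmult_le_pos. apply C_pos.
  apply pow_le; lra. apply pow_le; lra.
Qed.

Lemma comb_bound q u k : (k <= u)%nat -> (u <= q)%nat ->
  (3/2) ^ (q - u) / (INR (fact k) * INR (fact (u - k)) * INR (fact (q - u)))
  <= (7/2) ^ q / INR (fact q).
Proof.
  intros Hk Hu.
  assert (H1 := Cle2 u k Hk). assert (H2 := Cq q u Hu).
  assert (E : (3/2) ^ (q - u) / (INR (fact k) * INR (fact (u - k)) * INR (fact (q - u)))
             = C u k * C q u * (3/2) ^ (q - u) / INR (fact q)).
  { unfold C. assert (A1 := INR_fact_neq_0 k). assert (A2 := INR_fact_neq_0 (u-k)).
    assert (A3 := INR_fact_neq_0 (q-u)). assert (A4 := INR_fact_neq_0 u).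
    assert (A5 := INR_fact_neq_0 q). field. tauto. }
  rewrite E. unfold Rdiv. apply Rmult_le_compat_r.
  apply Rlt_le, Rinv_0_lt_compat, INR_fact_lt_0.
  assert (0 <= C q u * (3/2) ^ (q-u)) by (apply Rmult_le_pos; [apply C_pos | apply pow_le; lra]).
  apply Rle_trans with (2 ^ u * C q u * (3/2) ^ (q - u)).
  - rewrite !Rmult_assoc. apply Rmult_le_compat_r; auto.
  - replace (2 ^ u * C q u * (3/2) ^ (q - u)) with (C q u * 2 ^ u * (3/2) ^ (q - u)) by ring. auto.
Qed.

Lemma term_bound z K q u k :
  (forall n, hermiteH n z ^ 2 <= K * (3/2) ^ n * INR (fact n)) ->
  (k <= u)%nat -> (u <= q)%nat ->
  (alpha k (u - k) / (INR (fact k) * INR (fact (u - k)))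
   * (beta (q - u) z / INR (fact (q - u))))²
  <= (PI/2) * phi z ^ 2 * K * ((7/2) ^ q / INR (fact q)).
Proof.
  intros HK Hk Hu.
  assert (K0 : 0 <= K). { specialize (HK 0%nat). simpl in HK. unfold hermiteH in HK. simpl in HK. lra. }
  rewrite Rsqr_mult.
  set (n := (q - u)%nat).
  assert (Hn := INR_fact_lt_0 n).
  assert (HY : (beta n z / INR (fact n))² <= phi z ^ 2 * K * ((3/2) ^ n / INR (fact n))).
  { unfold beta. rewrite Rsqr_div', Rsqr_mult. unfold Rsqr.
    specialize (HK n).
    assert (0 <= phi z * phi z) by nra.
    apply lediv. nra.
    replace (phi z ^ 2 * K * ((3 / 2) ^ n / INR (fact n)) * (INR (fact n) * INR (fact n)))
      with (phi z * phi z * (K * (3/2) ^ n * INR (fact n))) by (field; lra).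
    apply Rmult_le_compat_l; auto. simpl in HK. lra. }
  assert (HX := alpha_term_bound k (u - k)).
  assert (Hk1 := INR_fact_lt_0 k). assert (Hk2 := INR_fact_lt_0 (u - k)).
  assert (HP := PI_RGT_0).
  assert (Hc := comb_bound q u k Hk Hu). fold n in Hc.
  apply Rle_trans with ((PI / 2) / (INR (fact k) * INR (fact (u - k))) *
                        (phi z ^ 2 * K * ((3/2) ^ n / INR (fact n)))).
  - apply Rmult_le_compat; auto; apply Rle_0_sqr.
  - assert (0 <= phi z ^ 2) by apply pow2_ge_0.
    replace ((PI / 2) / (INR (fact k) * INR (fact (u - k))) *
             (phi z ^ 2 * K * ((3/2) ^ n / INR (fact n))))
      with ((PI/2) * phi z ^ 2 * K *
            ((3/2) ^ n / (INR (fact k) * INR (fact (u - k)) * INR (fact n))))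
      by (field; lra).
    apply Rmult_le_compat_l; auto.
    apply Rmult_le_pos; auto. apply Rmult_le_pos; lra.
Qed.

Lemma poly_bound : exists D, forall n, (INR n + 1) ^ 4 * (7/8) ^ n <= D.
Proof.
  apply (ev_bounded _ 40). intros n Hn.
  apply le_INR in Hn. replace (INR 40) with 40 in Hn by (simpl; ring).
  rewrite S_INR. change ((7/8) ^ S n) with (7/8 * (7/8) ^ n).
  assert (0 < (7/8) ^ n) by (apply pow_lt; lra).
  set (x := INR n) in *.
  assert (Hp : (x + 1 + 1) ^ 4 * (7/8) <= (x + 1) ^ 4).
  { set (y := x + 1). assert (y >= 41) by (unfold y; lra).
    assert (y^4 - 28*y^3 - 42*y^2 - 28*y - 7 >= 0).
    { assert (y^3 >= 0) by (apply Rle_ge, pow_le; lra).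
      assert (y^4 >= 41 * y^3) by (replace (y^4) with (y * y^3) by ring; nra).
      assert (13 * y^3 >= 42*y^2 + 28*y + 7) by nra. lra. }
    replace ((y + 1) ^ 4) with (y^4 + 4*y^3 + 6*y^2 + 4*y + 1) by ring. lra. }
  replace ((x + 1 + 1) ^ 4 * (7 / 8 * (7 / 8) ^ n)) with (((x + 1 + 1) ^ 4 * (7/8)) * (7/8)^n) by ring.
  apply Rmult_le_compat_r; lra.
Qed.

Theorem mainTheorem12 :
  forall z : R, exists Cz : R,
    forall q : nat, (1 <= q)%nat ->
      Rabs (sum_f_R0 (fun u =>
              sum_f_R0 (fun k =>
                 alpha k (u - k) / (INR (fact k) * INR (fact (u - k)))
                 * (beta (q - u) z / INR (fact (q - u)))) u) q)
      <= Cz * 2 ^ q * (1 / sqrt (INR (fact (q - 1)))).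
Proof.
  intros z. destruct (herm_bound z) as [K HK]. destruct poly_bound as [D HD].
  assert (K0 : 0 <= K). { specialize (HK 0%nat). simpl in HK. unfold hermiteH in HK. simpl in HK. lra. }
  assert (D0 : 0 <= D). { specialize (HD 0%nat). simpl in HD. lra. }
  set (E := (PI/2) * phi z ^ 2 * K).
  assert (E0 : 0 <= E).
  { unfold E. assert (0 <= phi z ^ 2) by apply pow2_ge_0. assert (HP := PI_RGT_0).
    apply Rmult_le_pos; auto. apply Rmult_le_pos; lra. }
  exists (sqrt (E * D)). intros q Hq.
  assert (Fq := INR_fact_lt_0 q).
  set (B := sqrt (E * ((7/2) ^ q / INR (fact q)))).
  assert (B0 : 0 <= B) by apply sqrt_pos.
  assert (HB2 : B² = E * ((7/2) ^ q / INR (fact q))).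
  { apply Rsqr_sqrt. apply Rmult_le_pos; auto. apply Rlt_le, Rdiv_lt_0_compat; auto.
    apply pow_lt; lra. }
  assert (Hterm : forall u k, (k <= u)%nat -> (u <= q)%nat ->
     Rabs (alpha k (u - k) / (INR (fact k) * INR (fact (u - k)))
                 * (beta (q - u) z / INR (fact (q - u)))) <= B).
  { intros u k Hk Hu. apply Rsqr_incr_0_var; auto. rewrite <- Rsqr_abs, HB2.
    apply term_bound; auto. }
  apply Rle_trans with (B * INR (S q) * INR (S q)).
  - eapply Rle_trans. apply Rsum_abs.
    rewrite <- sum_cte. apply sum_Rle. intros u Hu.
    eapply Rle_trans. apply Rsum_abs.
    eapply Rle_trans. apply (sum_Rle _ (fun _ => B)). intros k Hk. apply Hterm; auto.
    rewrite sum_cte. apply Rmult_le_compat_l; auto. apply le_INR. lia.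
  - set (F1 := INR (fact (q - 1))).
    assert (HF1 : 0 < F1) by apply INR_fact_lt_0.
    assert (HFq : F1 <= INR (fact q)).
    { unfold F1. apply le_INR. destruct q. lia. simpl (S q - 1)%nat. rewrite Nat.sub_0_r.
      simpl. lia. }
    assert (R0 : 0 <= sqrt (E * D) * 2 ^ q * (1 / sqrt F1)).
    { apply Rmult_le_pos. apply Rmult_le_pos. apply sqrt_pos. apply pow_le; lra.
      apply Rlt_le, Rdiv_lt_0_compat. lra. apply sqrt_lt_R0; auto. }
    apply Rsqr_incr_0_var; auto.
    rewrite !Rsqr_mult, HB2, Rsqr_div'.
    rewrite (Rsqr_sqrt (E*D)) by (apply Rmult_le_pos; auto). rewrite (Rsqr_sqrt F1) by lra.
    assert (E1 : E * ((7 / 2) ^ q / INR (fact q)) * (INR (S q))² * (INR (S q))² =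
                 (E * 4 ^ q / INR (fact q)) * ((INR q + 1) ^ 4 * (7/8) ^ q)).
    { replace (7/2) with (4 * (7/8)) by field. rewrite Rpow_mult_distr, S_INR. unfold Rsqr. field. lra. }
    assert (E2 : E * D * (2 ^ q)² * (1² / F1) = (E * 4 ^ q) * D / F1).
    { unfold Rsqr. rewrite <- Rpow_mult_distr. replace (2*2) with 4 by ring. field. lra. }
    rewrite E1, E2.
    assert (H4 : 0 <= E * 4 ^ q) by (apply Rmult_le_pos; auto; apply pow_le; lra).
    apply Rle_trans with (E * 4 ^ q * D / INR (fact q)).
    + unfold Rdiv. rewrite (Rmult_comm (E * 4 ^ q) (/ _)), (Rmult_comm (E * 4 ^ q * D) (/ _)).
      rewrite !Rmult_assoc. apply Rmult_le_compat_l. apply Rlt_le, Rinv_0_lt_compat; auto.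
      apply Rmult_le_compat_l; auto. apply Rmult_le_compat_l; [apply pow_le; lra | apply HD].
    + unfold Rdiv. apply Rmult_le_compat_l. apply Rmult_le_pos; auto.
      apply Rinv_le_contravar; auto.
Qed.
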